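(* Let $n$ be a positive integer, $q=3^n$, $m=2n$, and let $f(x)=x^d$ with $d=(3^k+1)/2$, where $\gcd(k,2n)=1$, be the Coulter–Matthews planar function on $\mathbb F_{3^m}=\mathbb F_{q^2}$. Let $\mathcal U:=\{(x,y):y+y^q=f(x+x^q)\}\cup\{(\infty)\}$ (the unital of the unitary polarity of $\Pi(f)$ given by $(x,y)\mapsto L_{x^q,y^q}$, $(a)\mapsto N_{a^q}$, $(\infty)\mapsto L_\infty$), and let $\mathcal U_\theta:=\{(x,t\theta):x\in\mathbb F_{q^2},t\in\mathbb F_q\}\cup\{(\infty)\}$ with $\theta\in\mathbb F_{q^2}^*$ such that $\theta^{q+1}$ is a nonsquare in $\mathbb F_q$. Then the subgroups of the shift group $T$ of $\Pi(f)$ fixing $\mathcal U$ and fixing $\mathcal U_\theta$ have orders $3^{2n}$ and $3^{3n}$ respectively. Consequently $\mathcal U$ and $\mathcal U_\theta$ are inequivalent, i.e.\ no collineation of $\Pi(f)$ maps one onto the other.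
   Context: $\Pi(f)$ is the projective plane with points $(x,y)\in\mathbb F_{q^2}^2$ and $(a)$ for $a\in\mathbb F_{q^2}\cup\{\infty\}$, lines $L_{a,b}=\{(x,f(x+a)-b):x\in\mathbb F_{q^2}\}\cup\{(a)\}$, $N_a=\{(a,y):y\in\mathbb F_{q^2}\}\cup\{(\infty)\}$ ($a,b\in\mathbb F_{q^2}$), $L_\infty=\{(a):a\in\mathbb F_{q^2}\cup\{\infty\}\}$. The shift group $T$ consists of the collineations $\tau_{u,v}$ induced by $(x,y)\mapsto(x+u,y+v)$, $u,v\in\mathbb F_{q^2}$. A collineation is a bijection of points mapping lines onto lines. *)

(* Defs.v *)
From HB Require Import structures.
From mathcomp Require Import all_boot all_order all_algebra all_field.
Set Implicit Arguments. Unset Strict Implicit. Unset Printing Implicit Defensive.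
Import GRing.Theory.
Local Open Scope ring_scope.

(* Points of Pi(f): inl (x,y) is the affine point (x,y);
   inr (Some a) is the point (a) at infinity; inr None is (infinity). *)
Notation pt F := ((F * F) + option F)%type.

Section PlaneDefs.
Variable F : finFieldType.

Definition lineL (f : F -> F) (a b : F) : {set pt F} :=
  [set p : pt F | match p with
                  | inl (x, y) => y == f (x + a) - b
                  | inr (Some c) => c == a
                  | inr None => false end].

Definition lineN (a : F) : {set pt F} :=
  [set p : pt F | match p with
                  | inl (x, _) => x == a
                  | inr None => true
                  | inr (Some _) => false end].

Definition lineInf : {set pt F} :=
  [set p : pt F | if p is inr _ then true else false].

Definition is_line (f : F -> F) (L : {set pt F}) : Prop :=
  (exists a b, L = lineL f a b) \/ (exists a, L = lineN a) \/ L = lineInf.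

Definition collineation (f : F -> F) (g : pt F -> pt F) : Prop :=
  bijective g /\ forall L, is_line f L -> is_line f (g @: L).

(* the collineation tau_{u,v} induced by (x,y) |-> (x+u, y+v):
   it sends L_{a,b} to L_{a-u,b-v}, hence (a) to (a-u), N_a to N_{a+u},
   and fixes (infinity). *)
Definition tau (u v : F) (p : pt F) : pt F :=
  match p with
  | inl (x, y) => inl (x + u, y + v)
  | inr (Some a) => inr (Some (a - u))
  | inr None => inr None
  end.

(* subgroup of the shift group T fixing a point set S, indexed by (u,v)
   (the map (u,v) |-> tau_{u,v} is injective) *)
Definition shift_stab (S : {set pt F}) : {set F * F} :=
  [set uv : F * F | (tau uv.1 uv.2) @: S == S].

Definition unitalU (q : nat) (f : F -> F) : {set pt F} :=
  [set p : pt F | match p with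
                  | inl (x, y) => y + y ^+ q == f (x + x ^+ q)
                  | inr None => true
                  | inr (Some _) => false end].

Definition unitalUtheta (q : nat) (theta : F) : {set pt F} :=
  [set p : pt F | match p with
                  | inl (x, y) => [exists t : F, (t ^+ q == t) && (y == t * theta)]
                  | inr None => true
                  | inr (Some _) => false end].

End PlaneDefs.

(* Main.v *)
Require Import Defs.
From HB Require Import structures.
From mathcomp Require Import all_boot all_order all_algebra all_field.
From mathcomp Require Import zify ring.
Set Implicit Arguments. Unset Strict Implicit. Unset Printing Implicit Defensive.
Import GRing.Theory.
Local Open Scope ring_scope.

Lemma k_facts (n k : nat) : (0 < n)%N -> gcdn k (2 * n) = 1%N ->
  exists j r, k = (2 * j + 1)%N /\ ((3 ^ k + 1) %/ 2 = 12 * r + 2)%N /\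
     (3 ^ k + 1 = 2 * ((3 ^ k + 1) %/ 2))%N.
Proof.
move=> n0 g.
have ok : odd k.
  apply/negP => /negP; rewrite -dvdn2 => h2.
  have : (2 %| gcdn k (2 * n))%N by rewrite dvdn_gcd h2 dvdn_mulr.
  by rewrite g.
have ej : k = (2 * k./2 + 1)%N.
  by rewrite -{1}(odd_double_half k) ok -mul2n addnC.
set j := k./2 in ej.
have m9 : (9 ^ j %% 8 = 1)%N by rewrite -modnXm exp1n.
have e9 := divn_eq (9 ^ j) 8; rewrite m9 in e9.
set r := (9 ^ j %/ 8)%N in e9.
have e3 : (3 ^ k = 24 * r + 3)%N.
  by rewrite ej expnD expnM e9; lia.
exists j, (r)%N; rewrite e3; split => //; split; lia.
Qed.

Section Main.
Variable F : finFieldType.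
Variable n : nat.
Hypothesis n_gt0 : (0 < n)%N.
Hypothesis cardF : #|F| = (3 ^ (2 * n))%N.
Local Notation q := (3 ^ n)%N.

Lemma char3 : (3%N \in [pchar F])%R.
Proof. exact: (card_finPcharP cardF). Qed.

Lemma three0 : (3 : F) = 0.
Proof. by have := pcharf0 char3. Qed.

Lemma q_gt1 : (1 < q)%N.
Proof. by rewrite -{1}(expn0 3) ltn_exp2l. Qed.

Lemma frobD (x y : F) : (x + y) ^+ q = x ^+ q + y ^+ q.
Proof.
apply: exprDn_pchar; rewrite pnatX (pnatE _ (isT : prime 3)).
by rewrite char3.
Qed.

Lemma frob0 : (0 : F) ^+ q = 0.
Proof. by rewrite expr0n; case: q q_gt1. Qed.

Lemma frobN (x : F) : (- x) ^+ q = - x ^+ q.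
Proof. by apply/eqP; rewrite -addr_eq0 -frobD addNr frob0. Qed.

Lemma frobB (x y : F) : (x - y) ^+ q = x ^+ q - y ^+ q.
Proof. by rewrite frobD frobN. Qed.

Lemma frobq2 (x : F) : (x ^+ q) ^+ q = x.
Proof. by rewrite -exprM -expnD addnn -mul2n -cardF expf_card. Qed.

Lemma frob_inj (x y : F) : x ^+ q = y ^+ q -> x = y.
Proof. by move=> h; rewrite -(frobq2 x) h frobq2. Qed.

Lemma card_roots_le (c : F) : (#|[set x : F | (x ^+ q == c * x)%R]| <= q)%N.
Proof.
pose p : {poly F} := 'X^q - c *: 'X.
have sz : size p = q.+1.
  rewrite /p size_polyDl size_polyXn // size_polyN.
  by apply: (leq_ltn_trans (size_scale_leq _ _)); rewrite size_polyX ltnS q_gt1.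
have p0 : p != 0 by rewrite -size_poly_eq0 sz.
have := max_poly_roots p0 (rs := enum [set x : F | (x ^+ q == c * x)%R]).
rewrite sz ltnS -cardE; apply.
  apply/allP => x; rewrite mem_enum inE /root /p !hornerE.
  by move/eqP->; rewrite subrr.
exact: enum_uniq.
Qed.


Lemma two_neq0 : (2 : F) != 0.
Proof.
apply/eqP => h; have := three0; have -> : (3:F) = 2 + 1 by ring.
rewrite h add0r.
by move/eqP; rewrite oner_eq0.
Qed.

Lemma card_K_Fq : #|[set x : F | x ^+ q == - x]| = q /\ #|[set x : F | x ^+ q == x]| = q.
Proof.
set K := [set x : F | _]; set Fq := [set x : F | _].
have hK : (#|K| <= q)%N.
  have := card_roots_le (-1); congr (_ <= _)%N; apply: eq_card => x.
  by rewrite !inE mulN1r.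
have hF : (#|Fq| <= q)%N.
  have := card_roots_le 1; congr (_ <= _)%N; apply: eq_card => x.
  by rewrite !inE mul1r.
pose h (x : F) := (x + x ^+ q, x - x ^+ q).
have hinj : injective h.
  move=> x y [e1 e2]; have : x + x ^+ q + (x - x ^+ q) = y + y ^+ q + (y - y ^+ q).
    by rewrite e1 e2.
  have E (z : F) : z + z ^+ q + (z - z ^+ q) = 2 * z by ring.
  by rewrite !E => /(mulfI two_neq0).
have : (#|h @: [set: F]| <= #|setX Fq K|)%N.
  apply: subset_leq_card; apply/subsetP => _ /imsetP [x _ ->].
  rewrite !inE /= frobD frobq2 addrC eqxx /= frobB frobq2 opprB eqxx //.
rewrite card_imset // cardsX cardsT cardF => hle.
have e : (3 ^ (2 * n) = q * q)%N by rewrite mul2n -addnn expnD.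
rewrite e in hle.
have q1 := q_gt1; move: hle hK hF q1; set a := #|K|; set b := #|Fq|; set Q := q.
move=> *; split; nia.
Qed.

Variable k : nat.
Hypothesis gk : gcdn k (2 * n) = 1%N.
Local Notation d := ((3 ^ k + 1) %/ 2)%N.

Lemma d_even : exists m, d = (2 * m)%N.
Proof. have [j [r [_ [-> _]]]] := k_facts n_gt0 gk; exists (6 * r + 1)%N; lia. Qed.

Lemma d_gt0 : (0 < d)%N.
Proof. have [j [r [_ [-> _]]]] := k_facts n_gt0 gk; lia. Qed.

Lemma f_even (a : F) : (- a) ^+ d = a ^+ d.
Proof. by have [m ->] := d_even; rewrite !exprM sqrrN. Qed.

Lemma pow_fix_iter (c : F) (E : nat) : c ^+ E = c -> forall j, c ^+ (E ^ j) = c.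
Proof.
move=> h; elim=> [|j IH]; first by rewrite expn0 expr1.
by rewrite expnS exprM h IH.
Qed.

Lemma root_d (c : F) : c ^+ d = 1 -> c ^+ 2 = 1.
Proof.
move=> hc.
have [j [r [ek [ed e2]]]] := k_facts n_gt0 gk.
have c0 : c != 0.
  apply: contra_eq_neq hc => ->; rewrite expr0n gtn_eqF ?d_gt0 //.
  by rewrite /= eq_sym oner_eq0.
have e1 : c ^+ (3 ^ k) * c = 1 by rewrite -exprSr -addn1 e2 mulnC exprM hc expr1n.
have cu : c \is a GRing.unit by rewrite unitfE.
have ea : c ^+ (3 ^ k) = c^-1 by rewrite -[c ^+ _]mulr1 -(mulrV cu) mulrA e1 mul1r.
have e9k : c ^+ (3 ^ (2 * k)) = c.
  by rewrite mul2n -addnn expnD exprM ea exprVn ea invrK.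
have e2n : c ^+ (3 ^ (2 * n)) = c by rewrite -cardF expf_card.
have k0 : (0 < k)%N by lia.
have [km kn ekm ekn] := egcdnP (2 * n) k0; rewrite gk in ekm.
have e9 : c ^+ 9 = c.
  have := pow_fix_iter e9k km.
  rewrite -expnM -mulnA (mulnC k) ekm mulnDr muln1 expnD.
  rewrite (_ : (2 * (kn * (2 * n)) = (2 * n) * (2 * kn))%N); last by lia.
  by rewrite expnM exprM (pow_fix_iter e2n).
have e3 : c ^+ (3 ^ k) = c ^+ 3.
  by rewrite ek expnD expnM exprM (pow_fix_iter e9).
have e4 : c ^+ 4 = 1 by rewrite (exprS c 3) mulrC -e3 e1.
move: hc; rewrite ed exprD (_ : (12 * r = 4 * (3 * r))%N); last by lia.
by rewrite exprM e4 expr1n mul1r.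
Qed.

Lemma f_inj2 (a b : F) : a ^+ d = b ^+ d -> a = b \/ a = - b.
Proof.
move=> h; have [b0|b0] := eqVneq b 0.
  rewrite b0; move/eqP: h; rewrite b0; rewrite expr0n gtn_eqF ?d_gt0 // expf_eq0 d_gt0 /= => /eqP ->.
  by left.
have : (a / b) ^+ 2 == 1.
  by apply/eqP/root_d; rewrite expr_div_n h divff // expf_neq0.
rewrite sqrf_eq1 => /orP [] /eqP e.
  by left; rewrite -(divfK b0 a) e mul1r.
by right; rewrite -(divfK b0 a) e mulN1r.
Qed.

Local Notation f := (fun x : F => x ^+ d).
Local Notation Tr x := (x + x ^+ q).

Lemma TrD (a b : F) : Tr (a + b) = Tr a + Tr b.
Proof. by rewrite frobD; ring. Qed.

Lemma dbl (w : F) : w + w = - w.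
Proof.
apply/eqP; rewrite -subr_eq0 opprK; have -> : w + w + w = 3 * w by ring.
by rewrite three0 mul0r.
Qed.

Lemma f0 : (0 : F) ^+ d = 0.
Proof. by rewrite /= expr0n gtn_eqF ?d_gt0. Qed.

Lemma tauK (u v : F) : cancel (tau u v) (tau (- u) (- v)).
Proof. by case=> [[x y]|[a|]] //=; rewrite ?addrK ?subrK // opprK addrK. Qed.

Lemma tau_inj (u v : F) : injective (tau u v).
Proof. exact: can_inj (tauK u v). Qed.

Lemma stab_sub (S : {set pt F}) u v : tau u v @: S \subset S -> tau u v @: S == S.
Proof. by move=> h; rewrite eqEcard h (card_imset _ (@tau_inj u v)) leqnn. Qed.

Lemma stabU : shift_stab (unitalU q f) =
  setX [set u : F | Tr u == 0] [set v : F | Tr v == 0].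
Proof.
apply/setP => [[u v]]; rewrite !inE /=; apply/idP/idP.
- move=> h.
  have hm p : p \in unitalU q f -> tau u v p \in unitalU q f.
    by move=> pU; rewrite -(eqP h); apply: imset_f.
  have := hm (inl (0, 0)); rewrite !inE /= !add0r frob0 ?addr0 f0 eqxx => /(_ isT) /eqP e1.
  have := hm (inl (u, v)); rewrite !inE /= e1 eqxx => /(_ isT) /eqP.
  rewrite !TrD e1 !dbl f_even => hX.
  have : (u + u ^+ q) ^+ d + (u + u ^+ q) ^+ d = (u + u ^+ q) ^+ d + 0.
    by rewrite dbl hX addr0.
  move/addrI => X0; rewrite X0 eqxx andbT.
  by move/eqP: X0; rewrite expf_eq0 d_gt0.
- case/andP => /eqP hu /eqP hv; apply: stab_sub; apply/subsetP => _ /imsetP [p pU ->].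
  move: pU; case: p => [[x y]|[a|]]; rewrite !inE /= ?TrD ?hu ?hv ?addr0 //.
Qed.

Lemma card_stabU : #|shift_stab (unitalU q f)| = (3 ^ (2 * n))%N.
Proof.
rewrite stabU cardsX.
have [cK _] := card_K_Fq.
have e : forall x : F, (x + x ^+ q == 0) = (x ^+ q == - x).
  by move=> x; rewrite addrC addr_eq0.
rewrite (eq_card (B := [set x : F | x ^+ q == - x])); last by move=> x; rewrite !inE e.
by rewrite cK mul2n -addnn expnD.
Qed.

Variable theta : F.
Hypothesis th0 : theta != 0.
Hypothesis thns : ~ (exists s : F, s ^+ q = s /\ s ^+ 2 = theta ^+ (q + 1)).

Local Notation inS y := [exists t : F, (t ^+ q == t) && (y == t * theta)].

Lemma inS_add (a b : F) : inS a -> inS b -> inS (a + b).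
Proof.
move=> /existsP [t /andP [/eqP ht /eqP ->]] /existsP [s /andP [/eqP hs /eqP ->]].
by apply/existsP; exists (t + s); rewrite frobD ht hs eqxx mulrDl eqxx.
Qed.

Lemma inS0 : inS 0.
Proof. by apply/existsP; exists 0; rewrite frob0 mul0r eqxx. Qed.

Lemma inSN (a : F) : inS a -> inS (- a).
Proof.
move=> /existsP [t /andP [/eqP ht /eqP ->]].
by apply/existsP; exists (- t); rewrite frobN ht eqxx mulNr eqxx.
Qed.

Lemma stabT : shift_stab (unitalUtheta q theta) = setX [set: F] [set v : F | inS v].
Proof.
apply/setP => [[u v]]; rewrite !inE /=; apply/idP/idP.
- move=> h.
  have hm p : p \in unitalUtheta q theta -> tau u v p \in unitalUtheta q theta.
    by move=> pU; rewrite -(eqP h); apply: imset_f.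
  by have := hm (inl (0, 0)); rewrite !inE /= !add0r; apply; exact: inS0.
- move=> hv; apply: stab_sub; apply/subsetP => _ /imsetP [p pU ->].
  move: pU; case: p => [[x y]|[a|]]; rewrite !inE //= => hy.
  exact: inS_add.
Qed.

Lemma card_inS : #|[set v : F | inS v]| = q.
Proof.
have [_ cF] := card_K_Fq.
have -> : [set v : F | inS v] = (fun t => t * theta) @: [set t : F | t ^+ q == t].
  apply/setP => v; rewrite inE; apply/idP/idP.
    by case/existsP => t /andP [ht /eqP ->]; apply: imset_f; rewrite inE.
  case/imsetP => t; rewrite inE => ht ->; apply/existsP; exists t; by rewrite ht eqxx.
by rewrite card_imset ?cF //; exact: mulIf.
Qed.

Lemma card_stabT : #|shift_stab (unitalUtheta q theta)| = (3 ^ (3 * n))%N.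
Proof.
rewrite stabT cardsX cardsT card_inS cardF -expnD; congr (_ ^ _)%N; lia.
Qed.

Definition pol (P : pt F) : {set pt F} :=
  match P with
  | inl (x, y) => lineL f (x ^+ q) (y ^+ q)
  | inr (Some a) => lineN (a ^+ q)
  | inr None => lineInf F
  end.

Lemma fq_pow (x : F) : (x ^+ d) ^+ q = (x ^+ q) ^+ d.
Proof. by rewrite exprAC. Qed.

Lemma pol_help1 (x y a b : F) :
  b = (a + x ^+ q) ^+ d - y ^+ q -> y = (x + a ^+ q) ^+ d - b ^+ q.
Proof.
move=> ->; rewrite frobB fq_pow frobD frobq2 frobq2 (addrC x).
ring.
Qed.

Lemma pol_help2 (x a : F) : a = x ^+ q -> x = a ^+ q.
Proof. by move=> ->; rewrite frobq2. Qed.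

Lemma pol_sym P R : (R \in pol P) = (P \in pol R).
Proof.
case: P => [[x y]|[c|]]; case: R => [[a b]|[e|]]; rewrite !inE //=.
- by apply/eqP/eqP; apply: pol_help1.
- by apply/eqP/eqP; apply: pol_help2.
- by apply/eqP/eqP; apply: pol_help2.
Qed.

Lemma pol_abs P : (P \in pol P) = (P \in unitalU q f).
Proof.
case: P => [[x y]|[c|]]; rewrite !inE //=.
by rewrite eq_sym subr_eq eq_sym.
Qed.

Lemma pol_line P : is_line f (pol P).
Proof.
case: P => [[x y]|[c|]] /=; rewrite /is_line.
- by left; exists (x ^+ q), (y ^+ q).
- by right; left; exists (c ^+ q).
- by right; right.
Qed.

Lemma pol_inj : injective pol.
Proof.
move=> P R E; have hm X : (X \in pol P) = (X \in pol R) by rewrite E.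
case: P E hm => [[x y]|[c|]]; case: R => [[a b]|[e|]] => E hm //.
- have := hm (inr (Some (x ^+ q))); rewrite !inE /= eqxx => /esym /eqP /frob_inj ex.
  subst a; have := hm (inl (0, (0 + x ^+ q) ^+ d - y ^+ q)); rewrite !inE /= eqxx.
  by move=> /esym /eqP /addrI /oppr_inj /frob_inj ->.
- by have := hm (inr None); rewrite !inE.
- by have := hm (inr None); rewrite !inE.
- by have := hm (inr None); rewrite !inE.
- have := hm (inl (c ^+ q, 0)); rewrite !inE /= eqxx => /esym /eqP /frob_inj -> //.
- by have := hm (inl (c ^+ q, 0)); rewrite !inE /= eqxx.
- by have := hm (inr None); rewrite !inE.
- by have := hm (inl (e ^+ q, 0)); rewrite !inE /= eqxx.
Qed.

Local Notation psi y := ((y / theta) ^+ q - y / theta).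

Lemma psi0 (y : F) : psi y = 0 -> inS y.
Proof.
move/eqP; rewrite subr_eq0 => /eqP h.
by apply/existsP; exists (y / theta); rewrite h eqxx (divfK th0) eqxx.
Qed.

Lemma psiB (a b : F) : psi a - psi b = psi (a - b).
Proof. by rewrite !mulrBl frobB; ring. Qed.

Lemma psiK (y : F) : (psi y) ^+ q = - psi y.
Proof. by rewrite frobB frobq2 opprB. Qed.

Lemma f_notS (w : F) : w != 0 -> ~ inS (w ^+ d).
Proof.
move=> w0 /existsP [t /andP [/eqP ht /eqP e]].
have [m dm] := d_even.
set r := w ^+ m.
have r0 : r != 0 by rewrite expf_neq0.
have er : w ^+ d = r ^+ 2 by rewrite dm mulnC exprM.
have t0 : t != 0.
  by apply: contra_neq r0 => t0; move: e; rewrite er t0 mul0r => /eqP; rewrite expf_eq0 /= => /eqP.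
have eth : theta = r ^+ 2 / t by rewrite -er e mulrC mulKf.
apply: thns; exists (r ^+ (q + 1) / t); split.
  rewrite expr_div_n ht exprD exprMn frobq2 !expr1; congr (_ / _); exact: mulrC.
rewrite eth !expr_div_n [t ^+ (q + 1)]exprD expr1 ht -expr2 exprAC //.
Qed.

Lemma exists_ws : exists w1 w2 : F,
  [/\ w1 != 0, w2 != w1, w2 != - w1 & inS (w1 ^+ d - w2 ^+ d)].
Proof.
pose h (w : F) := psi (w ^+ d).
pose K0 := [set z : F | z ^+ q == - z] :\ 0.
have [cK _] := card_K_Fq.
have cK0 : #|K0| = q.-1.
  have := cardsD1 0 [set z : F | z ^+ q == - z].
  by rewrite cK inE frob0 oppr0 eqxx add1n => ->.
have hK0 w : w \in [set~ (0:F)] -> h w \in K0.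
  rewrite in_setC1 => w0; rewrite !inE psiK eqxx andbT.
  by apply/negP => /eqP /psi0; exact: f_notS.
have [z hz] : exists z : F, (2 < #|[set w : F | ((w != 0) && (h w == z))%R]|)%N.
  suff : [exists z : F, (2 < #|[set w : F | ((w != 0) && (h w == z))%R]|)%N].
    by case/existsP => z hz; exists z.
  apply: contraT => /existsPn hn; exfalso.
  have Hsum : (#|[set~ (0:F)%R]| <= \sum_(z in K0) 2)%N.
    rewrite -sum1_card (partition_big h (fun z => z \in K0)) //=.
    apply: leq_sum => z _; move: (hn z); rewrite -leqNgt -sum1_card.
    apply: leq_trans; rewrite leq_eqVlt; apply/orP; left; apply/eqP.
    by apply: eq_bigl => w; rewrite !inE.
  move: Hsum; rewrite sum_nat_const cK0 cardsC1 cardF.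
  have e : (3 ^ (2 * n) = q * q)%N by rewrite mul2n -addnn expnD.
  rewrite e; have := q_gt1; set Q := q; move=> *; nia.
set A := [set w : F | _] in hz.
have [w1 hw1] : exists w1, w1 \in A.
  by apply/set0Pn; rewrite -card_gt0; apply: ltn_trans hz.
have c1 := cardsD1 w1 A; rewrite hw1 /= in c1.
have c2 := cardsD1 (- w1) (A :\ w1).
have [w2 hw2] : exists w2, w2 \in A :\ w1 :\ - w1.
  apply/set0Pn; rewrite -card_gt0.
  rewrite c1 c2 in hz; move: hz; case: (_ \in _) => /=; rewrite ?add0n !add1n !ltnS //; apply: ltnW.
move: hw1 hw2; rewrite !inE => /andP [w10 /eqP h1] /and3P [n1 n2 /andP [_ /eqP h2]].
exists w1, w2; split => //.
by apply: psi0; rewrite -psiB -/(h w1) -/(h w2) h1 h2 subrr.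
Qed.

Local Notation S := (unitalUtheta q theta).

Lemma line_inf_aff L x y : is_line f L -> inr None \in L -> inl (x, y) \in L ->
  L = lineN x.
Proof.
case=> [[a [b ->]] | [[a ->] | ->]]; rewrite !inE //= => _ /eqP -> //.
Qed.

Lemma line_noinf L x y : is_line f L -> inr None \notin L -> inl (x, y) \in L ->
  exists a b, L = lineL f a b.
Proof.
case=> [[a [b ->]] | [[a ->] | ->]]; rewrite !inE //= => _ _.
by exists a, b.
Qed.

Lemma neg_self (w : F) : w = - w -> w = 0.
Proof.
move=> h; have : w + w = 0 by rewrite {2}h subrr.
by rewrite dbl => /eqP; rewrite oppr_eq0 => /eqP.
Qed.

Section Rho.
Variable rho : pt F -> {set pt F}.
Hypothesis rsym : forall P R, (R \in rho P) = (P \in rho R).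
Hypothesis rabs : forall P, (P \in rho P) = (P \in S).
Hypothesis rinj : injective rho.
Hypothesis rline : forall P, is_line f (rho P).

Lemma rhoInf : rho (inr None) = lineInf F.
Proof.
have hA : inr None \in rho (inr None) by rewrite rabs inE.
case: (rline (inr None)) => [[a [b E]] | [[a E] | //]].
  by move: hA; rewrite E inE.
have R1 : inl (a, 0) \in rho (inr None) by rewrite E !inE.
have R2 : inl (a, 0) \in rho (inl (a, 0)) by rewrite rabs inE /=; exact: inS0.
have R3 : inr None \in rho (inl (a, 0)) by rewrite rsym.
have := line_inf_aff (rline _) R3 R2; rewrite -E => /rinj; discriminate.
Qed.

Lemma rho_noinf x y : inr None \notin rho (inl (x, y)).
Proof. by rewrite rsym rhoInf inE. Qed.

Lemma rho_aff w s : inS s -> rho (inl (w, s)) = lineL f (- w) (- s).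
Proof.
move=> hs.
have hQ : inl (w, s) \in rho (inl (w, s)) by rewrite rabs inE.
have [a [b E]] := line_noinf (rline _) (rho_noinf w s) hQ.
have hQ' := hQ; rewrite E inE /= in hQ'; move/eqP: hQ' => es.
set w' := - w - a - a.
have hQs : inl (w', s) \in rho (inl (w, s)).
  rewrite E inE /= es (_ : w' + a = - (w + a)) ?f_even //.
  by rewrite /w'; ring.
have ew : w' = w.
  apply/eqP; apply/negP => /negP ne.
  have h1 : inl (w, s) \in rho (inl (w', s)) by rewrite rsym.
  have h2 : inl (w', s) \in rho (inl (w', s)) by rewrite rabs inE.
  have [a' [b' E']] := line_noinf (rline _) (rho_noinf w' s) h2.
  move: h1 h2; rewrite E' !inE /= => /eqP e1 /eqP e2.
  have : (w + a') ^+ d = (w' + a') ^+ d by apply: (addIr (- b')); rewrite -e1 -e2.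
  case/f_inj2 => e3.
    by move/addIr: e3 => e3; move: ne; rewrite e3 eqxx.
  have ea : a' = a.
    have H : a' + a' - (a + a) = (w + a') - (- (w' + a')) by rewrite /w'; ring.
    move: H; rewrite e3 subrr => /eqP; rewrite subr_eq0 !dbl => /eqP /oppr_inj //.
  subst a'.
  have eb : b' = b by apply: oppr_inj; apply: (addrI ((w + a) ^+ d)); rewrite -e1 -es.
  subst b'.
  have : inl (w', s) = inl (w, s) :> pt F by apply: rinj; rewrite E E'.
  by case => e4; move: ne; rewrite e4 eqxx.
have Ha : a = - w.
  have H : - w - a - a = - w + a by rewrite -addrA -opprD dbl opprK.
  by move: ew; rewrite /w' H => /eqP; rewrite addrC subr_eq dbl => /eqP.
subst a; move: es; rewrite subrr f0 add0r => es.
by rewrite E es opprK.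
Qed.

Lemma rho_false : False.
Proof.
have [w1 [w2 [w10 n21 n2m hS]]] := exists_ws.
set y1 := w1 ^+ d.
have foot w s : inS s -> s = y1 - w ^+ d -> inl (w, s) \in rho (inl (0, y1)).
  move=> hs es; rewrite rsym rho_aff // inE /= add0r f_even opprK es.
  by apply/eqP; ring.
have Q1 := foot w1 0 inS0 (esym (subrr _)).
have Q1' : inl (- w1, 0) \in rho (inl (0, y1)).
  by apply: foot inS0 _; rewrite f_even subrr.
have Q2 := foot w2 _ hS erefl.
have [c [e E]] := line_noinf (rline _) (rho_noinf 0 y1) Q1.
move: Q1 Q1' Q2; rewrite E !inE /= => /eqP e1 /eqP e2 /eqP e3.
have : (w1 + c) ^+ d = (- w1 + c) ^+ d by apply: (addIr (- e)); rewrite -e1 -e2.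
case/f_inj2 => ec.
  by move/addIr/neg_self: ec => /eqP; rewrite (negbTE w10).
have c0 : c = 0.
  apply: neg_self; apply: (addrI w1); rewrite ec opprD opprK; ring.
subst c; rewrite !addr0 in e1 e3.
have ee : e = y1 by apply/eqP; rewrite eq_sym -subr_eq0 -e1.
subst e.
have D0 : y1 - w2 ^+ d = 0.
  by apply: neg_self; rewrite {1}e3 opprB.
move/eqP: D0; rewrite subr_eq0 => /eqP /esym /f_inj2 [] ew.
  by move: n21; rewrite ew eqxx.
by move: n2m; rewrite ew eqxx.
Qed.
End Rho.

Lemma main_part3 (g : pt F -> pt F) :
  collineation f g -> g @: unitalU q f = unitalUtheta q theta -> False.
Proof.
move=> [[h gK hK] hcol] gU.
pose rho P := g @: pol (h P).
have gi : injective g by exact: can_inj gK.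
have mem R A : (R \in g @: A) = (h R \in A).
  by apply/imsetP/idP => [[x xA ->]|hA]; [rewrite gK | exists (h R); rewrite ?hK].
apply: (@rho_false rho).
- by move=> P R; rewrite /rho !mem pol_sym.
- by move=> P; rewrite /rho mem pol_abs -gU mem.
- move=> P R /(imset_inj gi) /pol_inj; exact: (can_inj hK).
- by move=> P; apply: hcol; exact: pol_line.
Qed.

End Main.

Unset Implicit Arguments.

Theorem theorem4p6 (n k : nat) (F : finFieldType) (theta : F) :
  (0 < n)%N ->
  #|F| = (3 ^ (2 * n))%N ->
  gcdn k (2 * n) = 1%N ->
  theta != 0 ->
  ~ (exists s : F, s ^+ (3 ^ n) = s /\ s ^+ 2 = theta ^+ (3 ^ n + 1)) ->
  let q := (3 ^ n)%N in
  let f := fun x : F => x ^+ ((3 ^ k + 1) %/ 2) in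
  #|shift_stab (unitalU q f)| = (3 ^ (2 * n))%N /\
  #|shift_stab (unitalUtheta q theta)| = (3 ^ (3 * n))%N /\
  ~ (exists g : pt F -> pt F,
       collineation f g /\ g @: unitalU q f = unitalUtheta q theta).
Proof.
move=> n0 cF gk th0 thns q f; rewrite /q /f; split; [|split].
- have H := card_stabU n0 cF gk; exact H.
- have H := card_stabT n0 cF gk th0; exact H.
- case=> g [col gU]; have H := main_part3 n0 cF gk th0 thns col gU; exact H.
Qed.
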